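(* Let $V\subset\mathbb{R}^n$ be finite, let $T\subset\mathbb{R}^n$ be $V$-closed, and let $x$ be an exposed point of $C=\operatorname{cl}\operatorname{conv}T$. Then $x\in\operatorname{cl}T$.
   Context: A set $T\subset\mathbb{R}^n$ is $V$-closed if for every $t\in T$ and every $v\in V$, at least one of $t+v$, $t-v$ lies in $T$. $\operatorname{cl}$ denotes topological closure and $\operatorname{conv}$ the convex hull. A boundary point $x$ of a convex set $C$ is exposed if there is a supporting hyperplane $H$ of $C$ with $H\cap C=\{x\}$. *)

(* Defs.v *)
(* R^n is 'rV[R]_n for R : realType, with the
   canonical (product/normed) topology on matrices. *)
From HB Require Import structures.
From mathcomp Require Import all_boot all_order all_algebra.
From mathcomp Require Import all_classical all_reals all_analysis.
Set Implicit Arguments. Unset Strict Implicit. Unset Printing Implicit Defensive.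
Import Order.TTheory GRing.Theory Num.Theory.
Import numFieldNormedType.Exports.
Local Open Scope classical_set_scope.
Local Open Scope ring_scope.

Definition dotv (R : realType) (n : nat) (a y : 'rV[R]_n) : R :=
  \sum_(i < n) a ord0 i * y ord0 i.

Definition V_closed (R : realType) (n : nat) (V T : set 'rV[R]_n) : Prop :=
  forall t v, T t -> V v -> T (t + v) \/ T (t - v).

Definition conv_hull (R : realType) (n : nat) (T : set 'rV[R]_n) : set 'rV[R]_n :=
  [set y | exists (k : nat) (l : 'I_k -> R) (p : 'I_k -> 'rV[R]_n),
     (forall i, 0 <= l i) /\ \sum_(i < k) l i = 1 /\
     (forall i, T (p i)) /\ y = \sum_(i < k) l i *: p i].

Definition supporting_hyperplane (R : realType) (n : nat)
  (C : set 'rV[R]_n) (a : 'rV[R]_n) (b : R) : Prop :=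
  a != 0 /\ (forall y, C y -> dotv a y <= b) /\ (exists y, C y /\ dotv a y = b).

Definition exposed_point (R : realType) (n : nat) (C : set 'rV[R]_n)
  (x : 'rV[R]_n) : Prop :=
  C x /\ ~ (interior C) x /\
  exists (a : 'rV[R]_n) (b : R), supporting_hyperplane C a b /\
    [set y | C y /\ dotv a y = b] = [set x].

(* Main.v *)
Set Warnings "-all".
Require Import Defs.
From HB Require Import structures.
From mathcomp Require Import all_boot all_order all_algebra.
From mathcomp Require Import all_classical all_reals all_analysis.
From mathcomp Require Import lra.
Import Order.TTheory GRing.Theory Num.Theory.
Import numFieldNormedType.Exports.
Local Open Scope classical_set_scope.
Local Open Scope ring_scope.

Section S.
Variables (R : realType) (n : nat).
Implicit Types (a u v : 'rV[R]_n).

Lemma dotvD a u v : dotv a (u + v) = dotv a u + dotv a v.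
Proof. by rewrite /dotv -big_split; apply: eq_bigr => i _; rewrite mxE mulrDr. Qed.

Lemma dotvZ a s u : dotv a (s *: u) = s * dotv a u.
Proof. by rewrite /dotv mulr_sumr; apply: eq_bigr => i _; rewrite mxE mulrCA. Qed.

Lemma dotvN a u : dotv a (- u) = - dotv a u.
Proof. by rewrite -scaleN1r dotvZ mulN1r. Qed.

Lemma dotvB a u v : dotv a (u - v) = dotv a u - dotv a v.
Proof. by rewrite dotvD dotvN. Qed.

Lemma dotv_sum a k (F : 'I_k -> 'rV[R]_n) :
  dotv a (\sum_(i < k) F i) = \sum_(i < k) dotv a (F i).
Proof.
rewrite /dotv exchange_big /=; apply: eq_bigr => i _.
by rewrite summxE mulr_sumr.
Qed.

Lemma coord_le u i : `|u ord0 i| <= `|u|.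
Proof.
have /mapP[j Hj ->] : `|u ord0 i| \in [seq `|u x.1 x.2| | x : 'I_1 * 'I_n].
  by apply/mapP; exists (ord0, i) => //=; rewrite mem_enum.
by rewrite [leRHS]/Num.norm /= mx_normrE; apply/bigmax_geP; right => /=; exists j.
Qed.

Lemma dotv_lip a u : `|dotv a u| <= (\sum_(i < n) `|a ord0 i|) * `|u|.
Proof.
rewrite /dotv mulr_suml; apply: le_trans (ler_norm_sum _ _ _) _.
apply: ler_sum => i _; rewrite normrM; apply: ler_wpM2l => //; exact: coord_le.
Qed.

Lemma dotv_cont a : continuous (dotv a).
Proof.
move=> y; apply/(@cvgrPdist_lt _ _ _ _ (nbhs_filter y)) => e e0.
set M := \sum_(i < n) `|a ord0 i|.
have M0 : 0 <= M by apply: sumr_ge0.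
have eM : 0 < e / (M + 1) by apply: divr_gt0 => //; lra.
apply/nbhs_ballP; exists (e / (M + 1)) => // z; rewrite -ball_normE /= => hz.
rewrite -dotvB; apply: le_lt_trans (dotv_lip _ _) _.
have : M * `|y - z| <= (M+1) * `|y - z| by apply: ler_wpM2r => //; lra.
move=> h; apply: le_lt_trans h _.
by rewrite mulrC -ltr_pdivlMr //; lra.
Qed.

Lemma conv_sub (T : set 'rV[R]_n) t : T t -> conv_hull T t.
Proof.
move=> Tt; exists 1%N, (fun=> 1), (fun=> t); split => //; split.
  by rewrite big_ord1.
by split => // ; rewrite big_ord1 scale1r.
Qed.

Lemma conv_convex (T : set 'rV[R]_n) u1 u2 s : 0 <= s <= 1 ->
  conv_hull T u1 -> conv_hull T u2 -> conv_hull T (s *: u1 + (1 - s) *: u2).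
Proof.
move=> /andP[s0 s1] [k1 [l1 [p1 [l10 [l11 [p1T ->]]]]]] [k2 [l2 [p2 [l20 [l21 [p2T ->]]]]]].
pose l := fun i : 'I_(k1 + k2) => match fintype.split i with inl j => s * l1 j | inr j => (1 - s) * l2 j end.
pose p := fun i : 'I_(k1 + k2) => match fintype.split i with inl j => p1 j | inr j => p2 j end.
have HL (j : 'I_k1) : fintype.split (lshift k2 j) = inl j := unsplitK (inl j).
have HR (j : 'I_k2) : fintype.split (rshift k1 j) = inr j := unsplitK (inr j).
exists (k1 + k2)%N, l, p; split.
  move=> i; rewrite /l; case: (fintype.split i) => j; apply: mulr_ge0 => //; lra.
split.
  rewrite big_split_ord /l /=.
  under eq_bigr do rewrite HL.
  under [X in _ + X]eq_bigr do rewrite HR.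
  by rewrite -!mulr_sumr l11 l21 !mulr1; lra.
split.
  by move=> i; rewrite /p; case: (fintype.split i).
rewrite big_split_ord /l /p /=.
under [X in _ = X + _]eq_bigr do rewrite HL.
under [X in _ = _ + X]eq_bigr do rewrite HR.
by rewrite !scaler_sumr; congr (_ + _); apply: eq_bigr => i _; rewrite scalerA.
Qed.

Lemma closure_convex (T : set 'rV[R]_n) y1 y2 s : 0 <= s <= 1 ->
  closure (conv_hull T) y1 -> closure (conv_hull T) y2 ->
  closure (conv_hull T) (s *: y1 + (1 - s) *: y2).
Proof.
move=> hs c1 c2 B /nbhs_ballP [r r0 rB].
have [u1 [cu1 bu1]] := c1 _ (nbhsx_ballx y1 r r0).
have [u2 [cu2 bu2]] := c2 _ (nbhsx_ballx y2 r r0).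
exists (s *: u1 + (1 - s) *: u2); split; first exact: conv_convex.
apply: rB; move: bu1 bu2; rewrite -ball_normE /= => bu1 bu2.
have -> : s *: y1 + (1 - s) *: y2 - (s *: u1 + (1 - s) *: u2)
   = s *: (y1 - u1) + (1 - s) *: (y2 - u2).
  by rewrite !scalerBr; rewrite opprD !addrA; congr (_ + _); rewrite addrAC.
apply: le_lt_trans (ler_normD _ _) _.
move: hs => /andP[s0 s1].
have s1' : 0 <= 1 - s by lra.
rewrite !normrZ (ger0_norm s0) (ger0_norm s1').
have h1 : s * `|y1 - u1| <= s * r := ler_wpM2l s0 (ltW bu1).
have h2 : (1 - s) * `|y2 - u2| <= (1 - s) * r := ler_wpM2l s1' (ltW bu2).
case: (ltrP 0 s) => sp.
  have : s * `|y1 - u1| < s * r by rewrite ltr_pM2l.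
  lra.
have s0' : s = 0 by apply/eqP; rewrite eq_le sp s0.
rewrite s0' mul0r add0r subr0 mul1r; lra.
Qed.

Lemma dist_cont (x : 'rV[R]_n) : continuous (fun y : 'rV[R]_n => `|y - x|).
Proof.
move=> y; apply/(@cvgrPdist_lt _ _ _ _ (nbhs_filter y)) => e e0.
apply/nbhs_ballP; exists e => // z; rewrite -ball_normE /= => hz.
apply: le_lt_trans (ler_dist_dist _ _) _.
by rewrite opprB addrA subrK.
Qed.

Lemma halfspace_closed (a : 'rV[R]_n) c : closed [set y | dotv a y <= c].
Proof.
have -> : [set y | dotv a y <= c] = dotv a @^-1` [set r | r <= c] by [].
apply: preimage_closed; last exact: closed_le.
by move=> y _; apply: dotv_cont.
Qed.

Lemma sphere_closed (x : 'rV[R]_n) e : closed [set y | `|y - x| = e].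
Proof.
have -> : [set y | `|y - x| = e] = (fun y => `|y - x|) @^-1` [set r | r = e] by [].
apply: preimage_closed; last exact: closed_eq.
by move=> y _; apply: dist_cont.
Qed.
End S.

Theorem lemma2p2 (R : realType) (n : nat) (V T : set 'rV[R]_n)
  (x : 'rV[R]_n) :
  finite_set V -> V_closed V T ->
  exposed_point (closure (conv_hull T)) x ->
  closure T x.
Proof.
move=> _ _ [Cx [_ [a [b [[a0 [hsup _]] hH]]]]].
set C := closure (conv_hull T) in Cx hsup hH *.
have [_ xb] : [set y | C y /\ dotv a y = b] x by rewrite hH.
have uniq y : C y -> dotv a y = b -> y = x.
  by move=> Cy yb; have : [set y | C y /\ dotv a y = b] y by [] ; rewrite hH.
have TC t : T t -> C t by move=> Tt; apply: subset_closure; apply: conv_sub.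
move=> B /nbhs_ballP [e e0 eB].
apply: contrapT => hno.
have far t : T t -> e <= `|t - x|.
  move=> Tt; rewrite leNgt; apply/negP => lt; apply: hno; exists t; split => //.
  by apply: eB; rewrite -ball_normE /= distrC.
have [t0 Tt0] : exists t, T t.
  have [u [[k [l [p [_ [l1 [pT _]]]]]] _]] := Cx _ (nbhsx_ballx x 1 ltr01).
  case: k l p l1 pT => [|k] l p l1 pT; first by rewrite big_ord0 in l1; move/eqP: l1; rewrite eq_sym oner_eq0.
  by exists (p ord0).
have seg t : T t -> let s := e / `|t - x| in
   [/\ 0 < s, s <= 1, C (s *: t + (1 - s) *: x), `|s *: t + (1 - s) *: x - x| = e &
       dotv a (s *: t + (1 - s) *: x) = s * dotv a t + (1 - s) * b].
  move=> Tt s; have ft := far t Tt.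
  have tx0 : 0 < `|t - x| by apply: lt_le_trans ft.
  have s0 : 0 < s by apply: divr_gt0.
  have s1 : s <= 1 by rewrite ler_pdivrMr // mul1r.
  split => //.
  - apply: closure_convex => //; first by rewrite (ltW s0) s1.
    exact: TC.
  - have -> : s *: t + (1 - s) *: x - x = s *: (t - x).
      by rewrite scalerBr scalerBl scale1r addrCA addrAC subrr add0r.
    by rewrite normrZ ger0_norm ?(ltW s0) // /s divfK // gt_eqF.
  - by rewrite dotvD !dotvZ xb.
pose K := [set y | C y /\ `|y - x| = e].
have Kne : K !=set0.
  by have [_ _ Cz ze _] := seg t0 Tt0; eexists; split; [exact: Cz | exact: ze].
have Kc : compact K.
  apply: bounded_closed_compact.
    change (\forall M \near +oo, globally K [set y | `|y| <= M]); near=> M => y [_ hy] /=.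
    apply: le_trans (_ : `|y - x| + `|x| <= M).
      by rewrite -{1}(subrK x y) ler_normD.
    rewrite hy; near: M; apply: nbhs_pinfty_ge; exact: num_real.
  apply: closedI; first exact: closed_closure.
  exact: sphere_closed.
have hc : {within K, continuous (dotv a)} by apply: continuous_subspaceT; apply: dotv_cont.
have [c cK cmax] := EVT_max_rV Kne Kc hc.
move: cK; rewrite inE => -[Cc ce].
have cb : dotv a c < b.
  rewrite lt_neqAle hsup // andbT; apply/eqP => cb.
  by move: ce; rewrite (uniq c Cc cb) subrr normr0 => e0'; move: e0; rewrite -e0' /= ltxx.
set d := b - dotv a c.
have bound t : T t -> dotv a t <= b - d.
  move=> Tt; have [s0 s1 Cz ze zv] := seg t Tt.
  have := cmax _ (mem_set (conj Cz ze)); rewrite zv => h.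
  have ht := hsup t (TC t Tt).
  rewrite /d; nra.
have convH : conv_hull T `<=` [set y | dotv a y <= b - d].
  move=> y [k [l [p [l0 [l1 [pT ->]]]]]] /=.
  rewrite dotv_sum; under eq_bigr do rewrite dotvZ.
  apply: le_trans (_ : \sum_(i < k) l i * (b - d) <= _).
    by apply: ler_sum => i _; apply: ler_wpM2l => //; apply: bound.
  by rewrite -mulr_suml l1 mul1r.
have := closureS convH Cx.
rewrite -(proj1 (closure_id _) (@halfspace_closed R n a (b - d))) /= xb /d.
lra.
Unshelve. all: by end_near.
Qed.
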